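(* Let $\alpha>0$ and $\tau\ge 0$. Consider the variational problem of minimizing $$\int_0^1\frac{x}{x+\alpha g(x)}\,dx$$ over measurable functions $g:[0,1]\to[0,\infty)$ satisfying $\int_0^1 g(x)\,dx=\tau$. The optimal (minimum) value of this problem is $$\max\left(1-\sqrt{\tfrac{2}{3}\alpha\tau},\ \frac{4}{9}\cdot\frac{1}{\frac12+\alpha\tau}\right).$$ *)

(* Defs.v *)
From HB Require Import structures.
From mathcomp Require Import all_boot all_order all_algebra.
From mathcomp Require Import all_classical all_reals all_analysis.
Set Implicit Arguments. Unset Strict Implicit. Unset Printing Implicit Defensive.
Import Order.TTheory GRing.Theory Num.Theory.
Local Open Scope classical_set_scope.
Local Open Scope ring_scope.

(* g : [0,1] -> [0,oo) measurable with \int_0^1 g = tau.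
   g is given as a function R -> R; only its values on [0,1] matter. *)
Definition feasible (R : realType) (tau : R) (g : R -> R) : Prop :=
  measurable_fun `[(0:R)%R, (1:R)%R] g /\
  (forall x : R, 0 <= x <= 1 -> 0 <= g x) /\
  (\int[@lebesgue_measure R]_(x in `[(0:R)%R, (1:R)%R]) (g x)%:E = tau%:E)%E.

Definition objective (R : realType) (alpha : R) (g : R -> R) : \bar R :=
  (\int[@lebesgue_measure R]_(x in `[(0:R)%R, (1:R)%R]) (x / (x + alpha * g x))%:E)%E.

Definition optimal_value (R : realType) (alpha tau : R) : R :=
  Num.max (1 - Num.sqrt (2 / 3 * alpha * tau))
          (4 / 9 * (1 / 2 + alpha * tau)^-1).

(* Main.v *)
Require Import Defs.
From HB Require Import structures.
From mathcomp Require Import all_boot all_order all_algebra.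
From mathcomp Require Import all_classical all_reals all_analysis.
From mathcomp Require Import measurable_realfun.
From mathcomp Require Import ring lra.
Import Order.TTheory GRing.Theory Num.Theory numFieldNormedType.Exports.
Local Open Scope ring_scope.
Local Open Scope classical_set_scope.

Section S.
Context {R : realType}.
Local Notation mu := (@lebesgue_measure R).

Lemma cont_add (f g : R -> R) x : {for x, continuous f} -> {for x, continuous g} ->
  continuous_at x (fun y => f y + g y).
Proof. exact: continuousD. Qed.
Lemma cont_mul (f g : R -> R) x : {for x, continuous f} -> {for x, continuous g} ->
  continuous_at x (fun y => f y * g y).
Proof. exact: continuousM. Qed.
Lemma cont_cst (a : R) x : continuous_at x (fun _ : R => a).
Proof. exact: cst_continuous. Qed.
Lemma cont_id x : continuous_at x (fun y : R => y).
Proof. exact: cvg_id. Qed.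
Lemma cont_sqrt x : continuous_at x (fun y : R => Num.sqrt y).
Proof. exact: sqrt_continuous. Qed.
Lemma cont_exp n x : continuous_at x (fun y : R => y ^+ n).
Proof. exact: exprn_continuous. Qed.

Lemma cont_opp (f : R -> R) x : {for x, continuous f} ->
  continuous_at x (fun y => - f y).
Proof. exact: continuousN. Qed.
Lemma cont_max (f g : R -> R) x : {for x, continuous f} -> {for x, continuous g} ->
  continuous_at x (fun y => Num.max (f y) (g y)).
Proof. exact: (@continuous_max _ _ f g). Qed.

Ltac cont := repeat first [apply: cont_add | apply: cont_mul | apply: cont_opp | apply: cont_max
  | apply: cont_cst | apply: cont_id | apply: cont_sqrt | apply: cont_exp].

Lemma int_sqrt (p q b : R) : 0 <= b ->
  (\int[mu]_(x in `[0%R, b]) (p * Num.sqrt x + q * x)%:E =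
   (p * (2/3) * (b * Num.sqrt b) + q * (b ^+ 2 / 2))%:E)%E.
Proof.
rewrite le_eqVlt => /predU1P[<-|b0].
  by rewrite set_itv1 integral_set1 sqrtr0 !mul0r !mulr0 expr0n /= mul0r mulr0 addr0.
pose F x := p * (2/3) * (x * Num.sqrt x) + q * (x ^+ 2 / 2).
have cF : continuous (F : R -> R).
  move=> x; rewrite /F.
  repeat first [apply: cont_add | apply: cont_mul | apply: cont_cst | apply: cont_id | apply: cont_sqrt | apply: cont_exp].
have dF (x : R) : 0 < x -> is_derive x (1:R) F (p * Num.sqrt x + q * x).
  move=> x0.
  have -> : F = (p*(2/3)) \*: ((@idfun R) * Num.sqrt) + (q/2) \*: ((@idfun R) ^+ 2).
    by apply/funext => y; rewrite /F !fctE /= /GRing.scale /=; field.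
  have hs := is_derive1_sqrt x0.
  apply: is_derive_eq.
  have E : x = Num.sqrt x ^+ 2 by rewrite sqr_sqrtr // ltW.
  have s0 : Num.sqrt x != 0 by rewrite gt_eqF // sqrtr_gt0.
  move: E s0; set s := Num.sqrt x => E s0.
  by rewrite /= E /GRing.scale /=; field.
rewrite (@continuous_FTC2 _ (fun x => p * Num.sqrt x + q * x) F)//.
- by rewrite /F sqrtr0 expr0n /= !(mul0r,mulr0,addr0,oppr0,adde0).
- apply: (@continuous_subspaceT R R) => x.
  repeat first [apply: cont_add | apply: cont_mul | apply: cont_cst | apply: cont_id | apply: cont_sqrt | apply: cont_exp].
- split.
  + move=> x /[!in_itv]/= /andP[x0 _]; have := dF x x0; by case.
  + by apply: cvg_at_right_filter; exact: cF.
  + by apply: cvg_at_left_filter; exact: cF.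
- move=> x /[!in_itv]/= /andP[x0 _]; by rewrite derive1E; have [_ ->] := dF x x0.
Qed.

Lemma inv_meas : measurable_fun setT (@GRing.inv R).
Proof.
have -> : [set: R] = [set 0] `|` ~` [set 0].
  by rewrite setUv.
apply/measurable_funU => //; first exact: measurableC.
split; first exact: measurable_fun_set1.
apply: measurable_realfun.open_continuous_measurable_fun.
  exact: (closed_openC (@closed_eq R 0)).
by move=> x /set_mem /eqP x0; apply: inv_continuous.
Qed.

Lemma split01 (f : R -> \bar R) (b : R) : 0 <= b <= 1 ->
  measurable_fun (`[0%R, 1%R] : set R) f ->
  (\int[mu]_(x in `[0%R, 1%R]) f x =
   \int[mu]_(x in `[0%R, b]) f x + \int[mu]_(x in `]b, 1%R]) f x)%E.
Proof.
move=> /andP[b0 b1] mf.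
have E : `[0%R, 1%R] = `[0%R, b] `|` `]b, 1%R] :> set R.
  by apply: itv_bndbnd_setU; rewrite bnd_simp.
rewrite E integral_setU //; first by rewrite -E.
rewrite disj_set2E; apply/eqP/seteqP; split => x //=.
by rewrite !in_itv/= => -[/andP[_ xb] /andP[bx _]]; move: (lt_le_trans bx xb); rewrite ltxx.
Qed.

Lemma int_cst_ob1 (r b : R) : b <= 1 ->
  (\int[mu]_(x in `]b, 1%R]) r%:E = (r * (1 - b))%:E)%E.
Proof.
move=> b1; rewrite integral_cst//= lebesgue_measure_itv/= lte_fin.
move: b1; rewrite le_eqVlt => /predU1P[->|b1]; first by rewrite ltxx subrr mulr0 mule0.
by rewrite b1 -EFinD -EFinM.
Qed.


Definition gopt (alpha c : R) (x : R) := Num.max 0 (c * Num.sqrt x - x) / alpha.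
Definition Bfun (c : R) (x : R) := 1 - (Num.max 0 (1 - Num.sqrt x / c)) ^+ 2.

Lemma meas_cont (f : R -> R) (D : set R) : continuous f -> measurable_fun D f.
Proof. by move=> cf; apply: measurable_funTS; exact: continuous_measurable_fun. Qed.

Lemma gopt_meas alpha c (D : set R) : measurable_fun D (gopt alpha c).
Proof. by apply: meas_cont => x; rewrite /gopt; cont. Qed.

Lemma Bfun_meas c (D : set R) : measurable_fun D (fun x => (Bfun c x)%:E).
Proof. by apply/measurable_EFinP; apply: meas_cont => x; rewrite /Bfun; cont. Qed.

Lemma obj_meas (alpha : R) (g : R -> R) (D : set R) : measurable D ->
  measurable_fun D g -> measurable_fun D (fun x => (x / (x + alpha * g x))%:E).
Proof.
move=> mD mg; apply/measurable_EFinP.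
apply: (@measurable_funM _ _ _ _ (fun x => x) (fun x => (x + alpha * g x)^-1)).
  exact: measurable_id.
apply: (measurableT_comp inv_meas).
apply: (@measurable_funD _ _ _ _ (fun x => x) (fun x => alpha * g x)).
  exact: measurable_id.
by apply: (@measurable_funM _ _ _ _ (fun x => alpha) g).
Qed.


Lemma objk_meas (alpha k : R) (g : R -> R) (D : set R) : measurable D ->
  measurable_fun D g -> measurable_fun D (fun x => (x / (x + alpha * g x) + k * g x)%:E).
Proof.
move=> mD mg; apply/measurable_EFinP.
apply: measurable_funD.
  by apply/measurable_EFinP; exact: obj_meas.
by apply: (@measurable_funM _ _ _ _ (fun x => k) g).
Qed.

Lemma Bfun_ge0 (c x : R) : 0 < c -> 0 <= Bfun c x.
Proof.
move=> c0; rewrite /Bfun subr_ge0.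
have m0 : 0 <= Num.max 0 (1 - Num.sqrt x / c) by rewrite le_max lexx.
have m1 : Num.max 0 (1 - Num.sqrt x / c) <= 1.
  rewrite ge_max ler01 /= lerBlDr lerDl; apply: divr_ge0; [exact: sqrtr_ge0 | exact: ltW].
by rewrite expr_le1.
Qed.

Lemma Bfun_le c x h : 0 < c -> 0 <= x -> 0 <= h -> Bfun c x <= x / (x + h) + h / c ^+ 2.
Proof.
move=> c0 x0 h0; rewrite /Bfun.
have sx := sqr_sqrtr x0; have s0 := sqrtr_ge0 x; move: sx s0.
set s := Num.sqrt x => sx s0; rewrite -sx.
have cn0 : c != 0 by rewrite gt_eqF.
case: (leP s c) => sc.
  have m0 : 0 <= 1 - s / c by rewrite subr_ge0 ler_pdivrMr // mul1r.
  rewrite max_r //.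
  have [y0|y0] := eqVneq (s ^+ 2 + h) 0.
    have s2 : s ^+ 2 = 0 by move: (sqr_ge0 s) => ?; lra.
    have hz : h = 0 by move: (sqr_ge0 s) => ?; lra.
    have sz : s = 0 by move/eqP: s2; rewrite sqrf_eq0 => /eqP.
    by rewrite sz hz !(mul0r, expr0n, subr0, addr0, expr1n, subrr) /=.
  rewrite -subr_ge0.
  have -> : s ^+ 2 / (s ^+ 2 + h) + h / c ^+ 2 - (1 - (1 - s / c) ^+ 2) =
            (s * c - (s ^+ 2 + h)) ^+ 2 / ((s ^+ 2 + h) * c ^+ 2) by field; rewrite ?cn0 ?y0.
  apply: divr_ge0; first exact: sqr_ge0.
  by apply: mulr_ge0; [lra| exact: sqr_ge0].
have m0 : 1 - s / c < 0 by rewrite subr_lt0 ltr_pdivlMr // mul1r.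
rewrite max_l ?(ltW m0) // expr0n /= subr0.
have c2 : 0 < c ^+ 2 by rewrite exprn_gt0.
have sc2 : c ^+ 2 < s ^+ 2 by rewrite ltr_pXn2r // ?nnegrE ltW.
have y0 : 0 < s ^+ 2 + h by lra.
have yn0 : s ^+ 2 + h != 0 by rewrite gt_eqF.
have c2n0 : c ^+ 2 != 0 by rewrite gt_eqF.
have E1 : s ^+ 2 / (s ^+ 2 + h) = 1 - h / (s ^+ 2 + h) by field.
have E2 : h / c ^+ 2 - h / (s ^+ 2 + h) = h * (s ^+ 2 + h - c ^+ 2) / (c ^+ 2 * (s ^+ 2 + h)).
  by field; rewrite yn0 cn0.
have : 0 <= h * (s ^+ 2 + h - c ^+ 2) / (c ^+ 2 * (s ^+ 2 + h)).
  by apply: divr_ge0; apply: mulr_ge0; lra.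
lra.
Qed.


Lemma gopt_in alpha c x : 0 < alpha -> 0 <= c -> 0 <= x -> Num.sqrt x <= c ->
  alpha * gopt alpha c x = c * Num.sqrt x - x /\
  x / (x + alpha * gopt alpha c x) = Num.sqrt x / c.
Proof.
move=> a0 c0 x0; rewrite /gopt.
have sx := sqr_sqrtr x0; have s0 := sqrtr_ge0 x; move: sx s0.
set s := Num.sqrt x => sx s0 sc; rewrite -sx.
have an0 : alpha != 0 by rewrite gt_eqF.
have m0 : 0 <= c * s - s ^+ 2 by rewrite expr2 -mulrBl; apply: mulr_ge0; lra.
rewrite max_r // mulrC divfK //; split => //.
have -> : s ^+ 2 + (c * s - s ^+ 2) = c * s by ring.
have [->|sn0] := eqVneq s 0; first by rewrite expr0n /= !mul0r.
have sp : 0 < s by rewrite lt_neqAle eq_sym sn0.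
have cn0 : c != 0 by rewrite gt_eqF //; lra.
by field; rewrite sn0 cn0.
Qed.

Lemma gopt_out alpha c x : 0 <= c -> c ^+ 2 < x ->
  gopt alpha c x = 0 /\ x / (x + alpha * gopt alpha c x) = 1.
Proof.
move=> c0 cx.
have x0 : 0 < x by apply: le_lt_trans cx; exact: sqr_ge0.
have sc : c < Num.sqrt x by rewrite -[c]ger0_norm // -sqrtr_sqr ltr_sqrt.
have sx := sqr_sqrtr (ltW x0); have s0 := sqrtr_ge0 x; move: sx s0 sc.
set s := Num.sqrt x => sx s0 sc.
have m0 : c * s - x < 0 by rewrite -sx expr2 -mulrBl pmulr_llt0; lra.
have -> : gopt alpha c x = 0 by rewrite /gopt max_l ?mul0r // ltW.
by split => //; rewrite mulr0 addr0 divff // gt_eqF.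
Qed.


Lemma sqrt_le_c (c x : R) : 0 <= c -> x <= c ^+ 2 -> Num.sqrt x <= c.
Proof.
move=> c0 xc; rewrite -[c in _ <= c]ger0_norm // -sqrtr_sqr ler_sqrt //.
exact: sqr_ge0.
Qed.

Lemma LB (alpha tau : R) (g : R -> R) (c b : R) : 0 < alpha -> feasible tau g -> 0 < c -> 0 <= b <= 1 ->
  b <= c ^+ 2 -> (forall x, b < x -> x <= 1 -> c ^+ 2 < x) ->
  (((4/3) * (b * Num.sqrt b) / c - b ^+ 2 / (2 * c ^+ 2) + (1 - b) - alpha * tau / c ^+ 2)%:E
    <= objective alpha g)%E.
Proof.
move=> a0 [mg [g0 ig]] c0 /andP[b0 b1] bc hb.
set k := alpha / c ^+ 2.
have cn0 : c != 0 by rewrite gt_eqF.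
have k0 : 0 <= k by rewrite /k; apply: divr_ge0; [exact: ltW | exact: sqr_ge0].
have I1 : (\int[mu]_(x in `[0%R, 1%R]) (Bfun c x)%:E =
  ((2/c) * (2/3) * (b * Num.sqrt b) + (-(1/c^+2)) * (b ^+ 2 / 2) + 1 * (1 - b))%:E)%E.
  rewrite (@split01 _ b) ?b0 ?b1 //; last exact: Bfun_meas.
  have -> : (\int[mu]_(x in `[0%R, b]) (Bfun c x)%:E =
     \int[mu]_(x in `[0%R, b]) ((2/c) * Num.sqrt x + (-(1/c^+2)) * x)%:E)%E.
    apply: eq_integral => x; rewrite inE /= in_itv /= => /andP[x0 xb].
    have sc : Num.sqrt x <= c by apply: sqrt_le_c; lra.
    have sx := sqr_sqrtr x0.
    congr (_%:E); rewrite /Bfun max_r; last by rewrite subr_ge0 ler_pdivrMr // mul1r.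
    move: sx; set s := Num.sqrt x => sx; rewrite -[X in _ = _ + _ * X]sx; by field; rewrite ?cn0.
  rewrite (int_sqrt (2/c) (-(1/c^+2)) b b0).
  have -> : (\int[mu]_(x in `]b, 1%R]) (Bfun c x)%:E =
     \int[mu]_(x in `]b, 1%R]) 1%:E)%E.
    apply: eq_integral => x; rewrite inE /= in_itv /= => /andP[bx x1].
    have cx := hb x bx x1.
    have sc : c < Num.sqrt x.
      by rewrite -[c]ger0_norm ?ltW // -sqrtr_sqr ltr_sqrt // (lt_trans _ cx) // exprn_gt0.
    congr (_%:E); rewrite /Bfun max_l ?expr0n /= ?subr0 //.
    by rewrite subr_le0 ler_pdivlMr // mul1r ltW.
  by rewrite int_cst_ob1 // -EFinD.
have m01 : measurable (`[0%R, 1%R] : set R) by exact: measurable_itv.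
have I2 : (\int[mu]_(x in `[0%R, 1%R]) (Bfun c x)%:E <=
    \int[mu]_(x in `[0%R, 1%R]) (x / (x + alpha * g x) + k * g x)%:E)%E.
  apply: ge0_le_integral => //.
  - move=> x; rewrite /= in_itv /= => /andP[x0 x1]; rewrite lee_fin; exact: Bfun_ge0.
  - exact: Bfun_meas.
  - exact: objk_meas.
  - move=> x; rewrite /= in_itv /= => /andP[x0 x1]; rewrite lee_fin.
    have := @Bfun_le c x (alpha * g x) c0 x0 (mulr_ge0 (ltW a0) (g0 x _)).
    rewrite x0 x1 => /(_ isT).
    have -> : alpha * g x / c ^+ 2 = k * g x by rewrite /k; field.
    done.
have I3 : (\int[mu]_(x in `[0%R, 1%R]) (x / (x + alpha * g x) + k * g x)%:E =
    objective alpha g + (k * tau)%:E)%E.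
  rewrite /objective.
  under eq_integral => x _ do rewrite EFinD.
  rewrite ge0_integralD //.
  - congr (_ + _)%E.
    under eq_integral => x _ do rewrite EFinM.
    rewrite ge0_integralZl_EFin //; try by [rewrite ig EFinM | apply/measurable_EFinP | move=> x /= /[!in_itv] /= hx; rewrite lee_fin g0].
  - move=> x /= /[!in_itv] /= /andP[x0 x1]; rewrite lee_fin; apply: divr_ge0 => //.
    by apply: addr_ge0 => //; apply: mulr_ge0; [exact: ltW | apply: g0; rewrite x0 x1].
  - exact: obj_meas.
  - move=> x /= /[!in_itv] /= /andP[x0 x1]; rewrite lee_fin; apply: mulr_ge0 => //.
    by apply: g0; rewrite x0 x1.
  - apply/measurable_EFinP.
    by apply: (@measurable_funM _ _ _ _ (fun x => k) g).
move: I2; rewrite I1 I3 => I2.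
rewrite (_ : _ - alpha * tau / c ^+ 2 = 2 / c * (2 / 3) * (b * Num.sqrt b) +
   - (1 / c ^+ 2) * (b ^+ 2 / 2) + 1 * (1 - b) - k * tau); last by rewrite /k; field.
by rewrite EFinB leeBlDr.
Qed.


Lemma EX (alpha c b : R) : 0 < alpha -> 0 <= c -> 0 <= b <= 1 -> b <= c ^+ 2 ->
  (forall x, b < x -> x <= 1 -> c ^+ 2 < x) ->
  (\int[mu]_(x in `[0%R, 1%R]) (gopt alpha c x)%:E =
     ((c * (2/3) * (b * Num.sqrt b) - b ^+ 2 / 2) / alpha)%:E)%E /\
  objective alpha (gopt alpha c) = ((2/3) * (b * Num.sqrt b) / c + (1 - b))%:E.
Proof.
move=> a0 c0 /andP[b0 b1] bc hb.
have an0 : alpha != 0 by rewrite gt_eqF.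
have m01 : measurable (`[0%R, 1%R] : set R) by exact: measurable_itv.
have inb x : x \in (`[0%R, b] : set R) -> 0 <= x /\ Num.sqrt x <= c.
  rewrite inE /= in_itv /= => /andP[x0 xb]; split => //; apply: sqrt_le_c => //; lra.
have outb x : x \in (`]b, 1%R] : set R) -> c ^+ 2 < x.
  by rewrite inE /= in_itv /= => /andP[bx x1]; apply: hb.
split.
  rewrite (@split01 _ b) ?b0 ?b1 //; last by apply/measurable_EFinP; exact: gopt_meas.
  have -> : (\int[mu]_(x in `[0%R, b]) (gopt alpha c x)%:E =
     \int[mu]_(x in `[0%R, b]) ((c / alpha) * Num.sqrt x + (- (1 / alpha)) * x)%:E)%E.
    apply: eq_integral => x /inb [x0 sc]; congr (_%:E).
    have [h1 _] := @gopt_in alpha c x a0 c0 x0 sc.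
    have -> : gopt alpha c x = (alpha * gopt alpha c x) / alpha by field; rewrite ?an0.
    by rewrite h1; field; rewrite ?an0.
  rewrite (int_sqrt (c / alpha) (- (1 / alpha)) b b0).
  have -> : (\int[mu]_(x in `]b, 1%R]) (gopt alpha c x)%:E =
     \int[mu]_(x in `]b, 1%R]) 0%:E)%E.
    by apply: eq_integral => x /outb cx; have [-> _] := @gopt_out alpha c x c0 cx.
  by rewrite int_cst_ob1 // -EFinD; congr (_%:E); field; rewrite ?an0.
rewrite /objective (@split01 _ b) ?b0 ?b1 //; last first.
  by apply: obj_meas => //; exact: gopt_meas.
have -> : (\int[mu]_(x in `[0%R, b]) (x / (x + alpha * gopt alpha c x))%:E =
   \int[mu]_(x in `[0%R, b]) ((1 / c) * Num.sqrt x + 0 * x)%:E)%E.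
  apply: eq_integral => x /inb [x0 sc]; congr (_%:E).
  have [_ ->] := @gopt_in alpha c x a0 c0 x0 sc.
  by rewrite mul0r addr0 mul1r mulrC.
rewrite (int_sqrt (1 / c) 0 b b0).
have -> : (\int[mu]_(x in `]b, 1%R]) (x / (x + alpha * gopt alpha c x))%:E =
   \int[mu]_(x in `]b, 1%R]) 1%:E)%E.
  by apply: eq_integral => x /outb cx; have [_ ->] := @gopt_out alpha c x c0 cx.
rewrite int_cst_ob1 // -EFinD; congr (_%:E).
by rewrite mul0r addr0 mul1r mul1r [_ / c]mulrC -!mulrA.
Qed.

End S.

Local Close Scope classical_set_scope.

Theorem mainTheorem3 (R : realType) (alpha tau : R) :
  0 < alpha -> 0 <= tau ->
  (exists g : R -> R, feasible tau g /\
     objective alpha g = (optimal_value alpha tau)%:E) /\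
  (forall g : R -> R, feasible tau g ->
     ((optimal_value alpha tau)%:E <= objective alpha g)%E).
Proof.
move=> a0 t0.
have an0 : alpha != 0 by rewrite gt_eqF.
have T0 : 0 <= alpha * tau by rewrite mulr_ge0 // ltW.
have s0 : 0 <= Num.sqrt (6 * (alpha * tau)) by exact: sqrtr_ge0.
have s2 : Num.sqrt (6 * (alpha * tau)) ^+ 2 = 6 * (alpha * tau) by rewrite sqr_sqrtr // mulr_ge0.
move: s0 s2; set s := Num.sqrt (6 * (alpha * tau)) => s0 s2.
have sq : Num.sqrt (2 / 3 * alpha * tau) = s / 3.
  rewrite (_ : 2 / 3 * alpha * tau = (s / 3) ^+ 2); first by rewrite sqrtr_sqr ger0_norm // divr_ge0.
  by rewrite expr_div_n s2; field.
rewrite /optimal_value sq.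
have gfeas c : 0 <= c -> forall x, 0 <= x <= 1 -> 0 <= gopt alpha c x.
  by move=> c0 x _; rewrite /gopt divr_ge0 ?le_max ?lexx // ltW.
case: (leP (alpha * tau) (1/6)) => hT.
- have s1 : s <= 1 by rewrite -sqrtr1 ler_sqrt //; lra.
  have mx : Num.max (1 - s / 3) (4 / 9 * (1 / 2 + alpha * tau)^-1) = 1 - s / 3.
    apply: max_l.
    have -> : 4 / 9 * (1 / 2 + alpha * tau)^-1 = 8 / (3 * (s ^+ 2 + 3)).
      rewrite s2; field; lra.
    rewrite ler_pdivrMr; last by apply: mulr_gt0 => //; move: (sqr_ge0 s); lra.
    have h3 : 0 <= (1 - s) ^+ 3 by apply: exprn_ge0; lra.
    have E : (1 - s / 3) * (3 * (s ^+ 2 + 3)) - 8 = (1 - s) ^+ 3 by field.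
    lra.
  rewrite mx.
  have c0 : 0 <= Num.sqrt s by exact: sqrtr_ge0.
  have c2 : Num.sqrt s ^+ 2 = s by rewrite sqr_sqrtr.
  move: c0 c2; set c := Num.sqrt s => c0 c2.
  have hb : forall x, s < x -> x <= 1 -> c ^+ 2 < x by move=> x; rewrite c2.
  have sc : s <= c ^+ 2 by rewrite c2.
  split.
    have [EI EO] := @EX R alpha c s a0 c0 (introT andP (conj s0 s1)) sc hb.
    exists (gopt alpha c); split; first split.
    + exact: gopt_meas.
    + split; first exact: gfeas.
      rewrite EI; congr (_%:E); rewrite -/c.
      have -> : c * (2 / 3) * (s * c) - s ^+ 2 / 2 = (2 / 3) * s * c ^+ 2 - s ^+ 2 / 2 by ring.
      by rewrite c2 -mulrA -expr2 s2; field; rewrite ?an0.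
    + rewrite EO -/c; congr (_%:E).
      have [c00|cn0] := eqVneq c 0.
        have sz : s = 0 by rewrite -c2 c00 expr0n.
        by rewrite sz c00 !(mul0r, mulr0, subr0, add0r).
      by rewrite -c2; field; rewrite ?cn0.
  move=> g fg.
  have [T00|Tp] := eqVneq (alpha * tau) 0.
    have sz : s = 0 by rewrite /s T00 mulr0 sqrtr0.
    rewrite sz mul0r subr0.
    apply/lee_subgt0Pr => e e0.
    set d := Num.min 1 e.
    have d0 : 0 < d by rewrite lt_min ltr01 e0.
    have d1 : d <= 1 by rewrite ge_min lexx.
    have de : d <= e by rewrite ge_min lexx orbT.
    have dd : 0 <= d * (1 - d) by apply: mulr_ge0; lra.
    have d2 : 0 <= d ^+ 2 <= 1 by rewrite sqr_ge0 /= expr_le1 // ltW.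
    have := @LB R alpha tau g d (d ^+ 2) a0 fg d0 d2 (lexx _) (fun x h _ => h).
    apply: le_trans; rewrite lee_fin.
    have dn0 : d != 0 by rewrite gt_eqF.
    rewrite sqrtr_sqr ger0_norm ?ltW // T00.
    have -> : 4 / 3 * (d ^+ 2 * d) / d - d ^+ 2 ^+ 2 / (2 * d ^+ 2) + (1 - d ^+ 2) - 0 / d ^+ 2
      = 1 - d * d / 6 by field.
    lra.
  have sp : 0 < s by rewrite sqrtr_gt0; apply: mulr_gt0 => //; rewrite lt_neqAle eq_sym Tp T0.
  have cp : 0 < c by rewrite sqrtr_gt0.
  have cn0 : c != 0 by rewrite gt_eqF.
  have sn0 : s != 0 by rewrite gt_eqF.
  have := @LB R alpha tau g c s a0 fg cp (introT andP (conj s0 s1)) sc hb.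
  have eT : alpha * tau = s ^+ 2 / 6 by lra.
  rewrite -/c c2 eT (_ : _ - s ^+ 2 / 6 / s = 1 - s / 3) //.
  by field; rewrite ?cn0 ?sn0.
- have s1 : 1 < s by rewrite -sqrtr1 ltr_sqrt; lra.
  have mx : Num.max (1 - s / 3) (4 / 9 * (1 / 2 + alpha * tau)^-1) = 4 / 9 * (1 / 2 + alpha * tau)^-1.
    apply: max_r.
    have -> : 4 / 9 * (1 / 2 + alpha * tau)^-1 = 8 / (3 * (s ^+ 2 + 3)).
      rewrite s2; field; lra.
    rewrite ler_pdivlMr; last by apply: mulr_gt0 => //; move: (sqr_ge0 s); lra.
    have h3 : 0 <= (s - 1) ^+ 3 by apply: exprn_ge0; lra.
    have E : 8 - (1 - s / 3) * (3 * (s ^+ 2 + 3)) = (s - 1) ^+ 3 by field.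
    lra.
  rewrite mx.
  set c := 3 / 2 * (alpha * tau + 1 / 2).
  have c1 : 1 < c by rewrite /c; lra.
  have cp : 0 < c by lra.
  have cn0 : c != 0 by rewrite gt_eqF.
  have sc : 1 <= c ^+ 2 by rewrite expr_ge1 // ltW.
  have hb : forall x, 1 < x -> x <= 1 -> c ^+ 2 < x by move=> x x1 x2; lra.
  have b01 : (0 : R) <= (1 : R) <= (1 : R) by rewrite ler01 lexx.
  split.
    have [EI EO] := @EX R alpha c 1 a0 (ltW cp) b01 sc hb.
    exists (gopt alpha c); split; first split.
    + exact: gopt_meas.
    + split; first exact: (gfeas c (ltW cp)).
      rewrite EI sqrtr1; congr (_%:E); rewrite /c.
      by field; rewrite ?an0.
    + rewrite EO sqrtr1; congr (_%:E); rewrite /c.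
      by field; lra.
  move=> g fg.
  have := @LB R alpha tau g c 1 a0 fg cp b01 sc hb.
  rewrite sqrtr1 (_ : _ - _ = 4 / 9 * (1 / 2 + alpha * tau)^-1) //.
  rewrite /c.
  by field; lra.
Qed.
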